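(* Let $b>0$, $\rho\in(\frac14,\frac12)$ and $h\in(0,1)$. If $m\in\mathbb Z$ satisfies $|m|>(1+\sqrt2)b/2$, then \[ \lambda_1\bigl(\mathcal H^{b,\rho}_{m,h}\bigr)>\inf_{\ell\in\mathbb Z}\lambda_1\bigl(\mathcal H^{b,\rho}_{\ell,h}\bigr). \]
   Context: Let $\delta=h^{\rho-\frac12}$. For $m\in\mathbb Z$, $\mathcal H^{b,\rho}_{m,h}$ is the self-adjoint operator in the weighted space $L^2((0,\delta);(1-h^{1/2}\tau)d\tau)$ associated with the quadratic form \[ v\mapsto\int_0^\delta\Bigl(|v'(\tau)|^2+\frac{h}{(1-h^{1/2}\tau)^2}\Bigl(m-\frac b2(1-h^{1/2}\tau)^2\Bigr)^2|v(\tau)|^2\Bigr)(1-h^{1/2}\tau)\,d\tau-|v(0)|^2 \] on $\{v\in H^1((0,\delta)):v(\delta)=0\}$ (boundary conditions $v'(0)=-v(0)$, $v(\delta)=0$). $\lambda_1(\cdot)$ denotes the lowest eigenvalue. *)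

(* Defs.v *)
From Stdlib Require Import Reals Lra ZArith.
Open Scope R_scope.

Definition delta (rho h : R) : R := Rpower h (rho - 1/2).

Definition wgt (h tau : R) : R := 1 - sqrt h * tau.

Definition pot (b h : R) (m : Z) (tau : R) : R :=
  h / (wgt h tau)^2 * (IZR m - b/2 * (wgt h tau)^2)^2.

(* lam is an eigenvalue of H^{b,rho}_{m,h}: there is a nonzero (real) C^2
   eigenfunction v on [0,delta] solving
     -(1/w)(w v')' + pot v = lam v,   v'(0) = - v(0),   v(delta) = 0.
   Note (w v')' = w v'' - sqrt h v' since w' = - sqrt h. *)
Definition is_eigenvalue (b rho h : R) (m : Z) (lam : R) : Prop :=
  exists v v1 v2 : R -> R,
    (forall t, 0 <= t <= delta rho h ->
       derivable_pt_lim v t (v1 t) /\ derivable_pt_lim v1 t (v2 t) /\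
       - (wgt h t * v2 t - sqrt h * v1 t) / wgt h t + pot b h m t * v t
         = lam * v t) /\
    v1 0 = - v 0 /\
    v (delta rho h) = 0 /\
    (exists t, 0 <= t <= delta rho h /\ v t <> 0).

Definition is_lambda1 (b rho h : R) (m : Z) (lam : R) : Prop :=
  is_eigenvalue b rho h m lam /\
  (forall mu, is_eigenvalue b rho h m mu -> lam <= mu).

Definition is_glb (E : R -> Prop) (g : R) : Prop :=
  (forall x, E x -> g <= x) /\ (forall g', (forall x, E x -> g' <= x) -> g' <= g).

(* Main.v *)
Require Import Defs.
From Stdlib Require Import Reals ZArith Lra Lia Psatz.
From Stdlib Require Import Ranalysis5.
From Coquelicot Require Import Coquelicot.
Open Scope R_scope.

Lemma dpl_eq f x l l' : derivable_pt_lim f x l -> l = l' -> derivable_pt_lim f x l'.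
Proof. intros H ->; exact H. Qed.

Lemma mono_deriv (g g' : R -> R) (a b : R) :
  a <= b -> (forall s, a <= s <= b -> derivable_pt_lim g s (g' s)) ->
  (forall s, a <= s <= b -> 0 <= g' s) -> g a <= g b.
Proof.
  intros hab hd hp. destruct (Req_dec a b) as [->|hne]; [lra|].
  destruct (MVT_cor2 g g' a b) as [c [hc hc']]; [lra|exact hd|].
  assert (0 <= g' c) by (apply hp; lra). nra.
Qed.

Lemma antideriv (f : R -> R) : continuity f ->
  forall t, derivable_pt_lim (fun t => RInt f 0 t) t (f t).
Proof.
  intros hf t. apply is_derive_Reals.
  apply (is_derive_RInt f (fun t => RInt f 0 t) 0 t).
  - apply filter_forall. intros x. apply (RInt_correct (V:=R_CompleteNormedModule)). apply (ex_RInt_continuous (V:=R_CompleteNormedModule)).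
    intros z _. apply continuity_pt_filterlim. apply hf.
  - apply continuity_pt_filterlim, hf.
Qed.

Lemma antideriv0 (f : R -> R) : RInt f 0 0 = 0.
Proof. rewrite (RInt_point (V:=R_CompleteNormedModule)). reflexivity. Qed.

Lemma der_powneg (c : R) (k : nat) s :
  derivable_pt_lim (fun s => c * (-s)^(S k)) s (- (c * INR (S k) * (-s)^k)).
Proof.
  apply is_derive_Reals. auto_derive. auto. simpl pred. destruct k; simpl; ring.
Qed.
Lemma der_pow (c : R) (k : nat) s :
  derivable_pt_lim (fun s => c * s^(S k)) s (c * INR (S k) * s^k).
Proof.
  apply is_derive_Reals. auto_derive. auto. simpl pred. destruct k; simpl; ring.
Qed.

Lemma deriv_bound (F f : R -> R) (C : R) (k : nat) :
  F 0 = 0 -> (forall s, derivable_pt_lim F s (f s)) ->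
  (forall s, Rabs (f s) <= C * Rabs s ^ k) ->
  forall t, Rabs (F t) <= C * Rabs t ^ (S k) / INR (S k).
Proof.
  intros F0 hF hb t.
  assert (hk : 0 < INR (S k)) by (apply lt_0_INR; lia).
  set (c := C / INR (S k)).
  destruct (Rle_or_lt 0 t) as [ht|ht].
  - assert (h1 : (fun s => c * s^(S k) - F s) 0 <= (fun s => c * s^(S k) - F s) t).
    { refine (mono_deriv (fun s => c * s^(S k) - F s) (fun s => c * INR (S k) * s^k - f s) 0 t _ _ _); [lra| |].
      - intros s _. apply derivable_pt_lim_minus; [apply der_pow| apply hF].
      - intros s hs. specialize (hb s). rewrite (Rabs_right s) in hb by lra.
        unfold c. replace (C / INR (S k) * INR (S k)) with C by (field; lra). apply Rabs_le_between in hb. lra. }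
    assert (h2 : (fun s => c * s^(S k) + F s) 0 <= (fun s => c * s^(S k) + F s) t).
    { refine (mono_deriv (fun s => c * s^(S k) + F s) (fun s => c * INR (S k) * s^k + f s) 0 t _ _ _); [lra| |].
      - intros s _. apply derivable_pt_lim_plus; [apply der_pow| apply hF].
      - intros s hs. specialize (hb s). rewrite (Rabs_right s) in hb by lra.
        unfold c. replace (C / INR (S k) * INR (S k)) with C by (field; lra). apply Rabs_le_between in hb. lra. }
    cbv beta in h1, h2. rewrite F0 in h1, h2. rewrite (Rabs_right t) by lra.
    replace (C * t ^ S k / INR (S k)) with (c * t ^ S k) by (unfold c; field; lra).
    apply Rabs_le. replace (0 ^ S k) with 0 in h1, h2 by (simpl; ring). lra.
  - assert (h1 : (fun s => c * (-s)^(S k) - F s) 0 <= (fun s => c * (-s)^(S k) - F s) t).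
    { set (g := fun s => - (c * (-s)^(S k) - F s)).
      assert (g t <= g 0); [|unfold g in *; lra].
      refine (mono_deriv g (fun s => c * INR (S k) * (-s)^k + f s) t 0 _ _ _); [lra| |].
      - intros s _. unfold g. apply (dpl_eq _ _ (- (- (c * INR (S k) * (-s)^k) - f s))); [|ring].
        apply (derivable_pt_lim_opp (fun s => c * (-s)^(S k) - F s)).
        apply derivable_pt_lim_minus; [apply der_powneg| apply hF].
      - intros s hs. specialize (hb s). rewrite (Rabs_left1 s) in hb by lra.
        unfold c. replace (C / INR (S k) * INR (S k)) with C by (field; lra). apply Rabs_le_between in hb. lra. }
    assert (h2 : (fun s => c * (-s)^(S k) + F s) 0 <= (fun s => c * (-s)^(S k) + F s) t).
    { set (g := fun s => - (c * (-s)^(S k) + F s)).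
      assert (g t <= g 0); [|unfold g in *; lra].
      refine (mono_deriv g (fun s => c * INR (S k) * (-s)^k - f s) t 0 _ _ _); [lra| |].
      - intros s _. unfold g. apply (dpl_eq _ _ (- (- (c * INR (S k) * (-s)^k) + f s))); [|ring].
        apply (derivable_pt_lim_opp (fun s => c * (-s)^(S k) + F s)).
        apply derivable_pt_lim_plus; [apply der_powneg| apply hF].
      - intros s hs. specialize (hb s). rewrite (Rabs_left1 s) in hb by lra.
        unfold c. replace (C / INR (S k) * INR (S k)) with C by (field; lra). apply Rabs_le_between in hb. lra. }
    cbv beta in h1, h2. rewrite F0 in h1, h2. rewrite (Rabs_left t) by lra.
    replace (C * (-t) ^ S k / INR (S k)) with (c * (-t) ^ S k) by (unfold c; field; lra).
    apply Rabs_le. replace ((-0) ^ S k) with 0 in h1, h2 by (simpl; ring). lra.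
Qed.

Fixpoint pic (a c : R -> R) (y0 p0 : R) (n : nat) : (R -> R) * (R -> R) :=
  match n with
  | O => (fun _ => y0, fun _ => p0)
  | S k => let q := pic a c y0 p0 k in
      (fun t => y0 + RInt (fun s => a s * snd q s) 0 t,
       fun t => p0 + RInt (fun s => c s * fst q s) 0 t)
  end.

Lemma pic_swap a c y0 p0 n :
  fst (pic c a p0 y0 n) = snd (pic a c y0 p0 n) /\
  snd (pic c a p0 y0 n) = fst (pic a c y0 p0 n).
Proof.
  induction n as [|n [IH1 IH2]]; simpl; [split; reflexivity|].
  rewrite IH1, IH2. split; reflexivity.
Qed.

Lemma dpl_ext f g x l : (forall t, f t = g t) -> derivable_pt_lim f x l -> derivable_pt_lim g x l.
Proof.
  intros He H eps Heps. destruct (H eps Heps) as [d Hd]. exists d.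
  intros h Hh Hh'. rewrite <- !He. apply Hd; assumption.
Qed.

Lemma der_const_plus (y0 : R) (f : R -> R) t l :
  derivable_pt_lim f t l -> derivable_pt_lim (fun t => y0 + f t) t l.
Proof.
  intros H. apply (dpl_eq _ _ (0 + l)); [|ring].
  apply (derivable_pt_lim_plus (fun _ => y0) f). apply derivable_pt_lim_const. exact H.
Qed.

Lemma pic_cont a c y0 p0 : continuity a -> continuity c -> forall n,
  continuity (fst (pic a c y0 p0 n)) /\ continuity (snd (pic a c y0 p0 n)).
Proof.
  intros ha hc n. induction n as [|n [IH1 IH2]].
  - simpl. split; apply continuity_const; intros x y; reflexivity.
  - simpl. split; intros t.
    + apply derivable_continuous_pt. exists (a t * snd (pic a c y0 p0 n) t).
      apply der_const_plus. apply (antideriv (fun s => a s * snd (pic a c y0 p0 n) s)).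
      apply (continuity_mult a); assumption.
    + apply derivable_continuous_pt. exists (c t * fst (pic a c y0 p0 n) t).
      apply der_const_plus. apply (antideriv (fun s => c s * fst (pic a c y0 p0 n) s)).
      apply (continuity_mult c); assumption.
Qed.

Lemma pic_der a c y0 p0 : continuity a -> continuity c -> forall n t,
  derivable_pt_lim (fst (pic a c y0 p0 (S n))) t (a t * snd (pic a c y0 p0 n) t) /\
  derivable_pt_lim (snd (pic a c y0 p0 (S n))) t (c t * fst (pic a c y0 p0 n) t).
Proof.
  intros ha hc n t. destruct (pic_cont a c y0 p0 ha hc n) as [H1 H2]. simpl. split.
  - apply der_const_plus. apply (antideriv (fun s => a s * snd (pic a c y0 p0 n) s)).
    apply (continuity_mult a); assumption.
  - apply der_const_plus. apply (antideriv (fun s => c s * fst (pic a c y0 p0 n) s)).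
    apply (continuity_mult c); assumption.
Qed.

Lemma pic_at0 a c y0 p0 n : fst (pic a c y0 p0 n) 0 = y0 /\ snd (pic a c y0 p0 n) 0 = p0.
Proof.
  destruct n; simpl; [split; reflexivity|]. rewrite !antideriv0. split; ring.
Qed.

Definition dy a c y0 p0 n t := fst (pic a c y0 p0 (S n)) t - fst (pic a c y0 p0 n) t.
Definition dp a c y0 p0 n t := snd (pic a c y0 p0 (S n)) t - snd (pic a c y0 p0 n) t.

Lemma pic_bound a c y0 p0 M : continuity a -> continuity c -> 0 <= M ->
  (forall t, Rabs (a t) <= M) -> (forall t, Rabs (c t) <= M) ->
  forall n t,
  Rabs (dy a c y0 p0 n t) <= (Rabs y0 + Rabs p0) * (M * Rabs t)^(S n) / INR (Factorial.fact (S n)) /\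
  Rabs (dp a c y0 p0 n t) <= (Rabs y0 + Rabs p0) * (M * Rabs t)^(S n) / INR (Factorial.fact (S n)).
Proof.
  intros ha hc hM hba hbc n. set (K := Rabs y0 + Rabs p0).
  assert (hK : 0 <= K) by (unfold K; pose proof (Rabs_pos y0); pose proof (Rabs_pos p0); lra).
  induction n as [|n IH].
  - intros t. unfold dy, dp. split.
    + pose proof (deriv_bound (fun t => fst (pic a c y0 p0 1) t - y0) (fun t => a t * p0) (K*M) 0) as H.
      replace ((M * Rabs t) ^ 1) with ((Rabs t)^1 * M) by ring.
      replace (INR (Factorial.fact 1)) with (INR 1) by reflexivity.
      replace (K * (Rabs t ^ 1 * M)) with (K * M * Rabs t ^ 1) by ring.
      apply H.
      * destruct (pic_at0 a c y0 p0 1) as [e _]. rewrite e. ring.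
      * intros s. apply (dpl_eq _ _ (a s * snd (pic a c y0 p0 0) s - 0)); [|simpl; ring].
        apply derivable_pt_lim_minus. apply (pic_der a c y0 p0 ha hc 0 s). apply derivable_pt_lim_const.
      * intros s. rewrite Rabs_mult. simpl. rewrite Rmult_1_r.
        pose proof (hba s). pose proof (Rabs_pos p0). pose proof (Rabs_pos y0).
        apply (Rle_trans _ (M * Rabs p0)). apply Rmult_le_compat_r; assumption.
        unfold K. rewrite Rmult_comm. apply Rmult_le_compat_r; lra.
    + pose proof (deriv_bound (fun t => snd (pic a c y0 p0 1) t - p0) (fun t => c t * y0) (K*M) 0) as H.
      replace ((M * Rabs t) ^ 1) with ((Rabs t)^1 * M) by ring.
      replace (INR (Factorial.fact 1)) with (INR 1) by reflexivity.
      replace (K * (Rabs t ^ 1 * M)) with (K * M * Rabs t ^ 1) by ring.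
      apply H.
      * destruct (pic_at0 a c y0 p0 1) as [_ e]. rewrite e. ring.
      * intros s. apply (dpl_eq _ _ (c s * fst (pic a c y0 p0 0) s - 0)); [|simpl; ring].
        apply derivable_pt_lim_minus. apply (pic_der a c y0 p0 ha hc 0 s). apply derivable_pt_lim_const.
      * intros s. rewrite Rabs_mult. simpl. rewrite Rmult_1_r.
        pose proof (hbc s). pose proof (Rabs_pos p0). pose proof (Rabs_pos y0).
        apply (Rle_trans _ (M * Rabs y0)). apply Rmult_le_compat_r; assumption.
        unfold K. rewrite Rmult_comm. apply Rmult_le_compat_r; lra.
  - intros t.
    set (C := K * M ^ (S (S n)) / INR (Factorial.fact (S n))).
    assert (hf : 0 < INR (Factorial.fact (S n))) by (apply lt_0_INR, Factorial.lt_O_fact).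
    assert (hC : 0 <= C) by (unfold C; apply Rmult_le_pos; [apply Rmult_le_pos; [lra|apply pow_le; lra]| apply Rlt_le, Rinv_0_lt_compat; lra]).
    assert (eqb : K * (M * Rabs t) ^ S (S n) / INR (Factorial.fact (S (S n))) = C * Rabs t ^ S (S n) / INR (S (S n))).
    { unfold C. rewrite Rpow_mult_distr.
      replace (Factorial.fact (S (S n))) with (S (S n) * Factorial.fact (S n))%nat by reflexivity.
      rewrite mult_INR. field. split; [lra|]. apply not_0_INR. lia. }
    rewrite eqb. split.
    + apply (deriv_bound (dy a c y0 p0 (S n)) (fun s => a s * dp a c y0 p0 n s) C (S n)).
      * unfold dy. destruct (pic_at0 a c y0 p0 (S (S n))) as [e1 _].
        destruct (pic_at0 a c y0 p0 (S n)) as [e2 _]. rewrite e1, e2. ring.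
      * intros s. unfold dy, dp. rewrite Rmult_minus_distr_l.
        apply derivable_pt_lim_minus; [exact (proj1 (pic_der a c y0 p0 ha hc (S n) s))|exact (proj1 (pic_der a c y0 p0 ha hc n s))].
      * intros s. rewrite Rabs_mult. destruct (IH s) as [_ Hs].
        pose proof (hba s). pose proof (Rabs_pos (dp a c y0 p0 n s)).
        apply (Rle_trans _ (M * (K * (M * Rabs s) ^ S n / INR (Factorial.fact (S n))))).
        { apply Rmult_le_compat; try assumption. apply Rabs_pos. }
        right. unfold C. rewrite Rpow_mult_distr. rewrite <- (tech_pow_Rmult M (S n)). field. lra.
    + apply (deriv_bound (dp a c y0 p0 (S n)) (fun s => c s * dy a c y0 p0 n s) C (S n)).
      * unfold dp. destruct (pic_at0 a c y0 p0 (S (S n))) as [_ e1].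
        destruct (pic_at0 a c y0 p0 (S n)) as [_ e2]. rewrite e1, e2. ring.
      * intros s. unfold dy, dp. rewrite Rmult_minus_distr_l.
        apply derivable_pt_lim_minus; [exact (proj2 (pic_der a c y0 p0 ha hc (S n) s))|exact (proj2 (pic_der a c y0 p0 ha hc n s))].
      * intros s. rewrite Rabs_mult. destruct (IH s) as [Hs _].
        pose proof (hbc s). pose proof (Rabs_pos (dy a c y0 p0 n s)).
        apply (Rle_trans _ (M * (K * (M * Rabs s) ^ S n / INR (Factorial.fact (S n))))).
        { apply Rmult_le_compat; try assumption. apply Rabs_pos. }
        right. unfold C. rewrite Rpow_mult_distr. rewrite <- (tech_pow_Rmult M (S n)). field. lra.
Qed.

Lemma pic_tele a c y0 p0 n t :
  fst (pic a c y0 p0 (S n)) t = y0 + SP (dy a c y0 p0) n t /\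
  snd (pic a c y0 p0 (S n)) t = p0 + SP (dp a c y0 p0) n t.
Proof.
  induction n as [|n [IH1 IH2]].
  - unfold SP, dy, dp. split; simpl; ring.
  - unfold SP in *. split; simpl sum_f_R0.
    + rewrite <- Rplus_assoc, <- IH1. unfold dy. ring.
    + rewrite <- Rplus_assoc, <- IH2. unfold dp. ring.
Qed.

Lemma exp_tail x K : 0 <= x -> 0 <= K ->
  Un_cv (fun n => sum_f_R0 (fun k => Rabs (K * x^(S k) / INR (Factorial.fact (S k)))) n) (K * (exp x - 1)).
Proof.
  intros hx hK.
  assert (hs : forall n, sum_f_R0 (fun k => Rabs (K * x^(S k) / INR (Factorial.fact (S k)))) n
     = K * (sum_f_R0 (fun i => / INR (Factorial.fact i) * x ^ i) (S n) - 1)).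
  { induction n as [|n IH].
    - simpl. rewrite Rabs_right. field.
      apply Rle_ge. apply Rmult_le_pos. apply Rmult_le_pos; [lra|]. lra. simpl; lra.
    - rewrite (tech5 (fun k => Rabs (K * x^(S k) / INR (Factorial.fact (S k))))). rewrite IH. replace (sum_f_R0 (fun i => / INR (Factorial.fact i) * x ^ i) (S (S n)))
        with (sum_f_R0 (fun i => / INR (Factorial.fact i) * x ^ i) (S n) + / INR (Factorial.fact (S (S n))) * x ^ (S (S n))) by reflexivity.
      rewrite Rabs_right. field. apply not_0_INR, Factorial.fact_neq_0.
      apply Rle_ge. apply Rmult_le_pos. apply Rmult_le_pos; [lra|apply pow_le; lra].
      apply Rlt_le, Rinv_0_lt_compat, lt_0_INR, Factorial.lt_O_fact. }
  pose proof (proj2_sig (exist_exp x)) as He. change (exp_in x (exp x)) in He.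
  intros eps Heps.
  destruct (He (eps / (K + 1))) as [N HN].
  { apply Rlt_gt. apply Rdiv_lt_0_compat; lra. }
  exists N. intros n Hn. rewrite hs. unfold Rdist.
  specialize (HN (S n) ltac:(lia)). unfold Rdist in HN.
  replace (K * (sum_f_R0 (fun i : nat => / INR (Factorial.fact i) * x ^ i) (S n) - 1) - K * (exp x - 1))
    with (K * (sum_f_R0 (fun i : nat => / INR (Factorial.fact i) * x ^ i) (S n) - exp x)) by ring.
  rewrite Rabs_mult, (Rabs_right K) by lra.
  apply (Rle_lt_trans _ ((K+1) * Rabs (sum_f_R0 (fun i : nat => / INR (Factorial.fact i) * x ^ i) (S n) - exp x))).
  { apply Rmult_le_compat_r; [apply Rabs_pos|lra]. }
  replace eps with ((K+1) * (eps / (K+1))) by (field; lra).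
  apply Rmult_lt_compat_l; lra.
Qed.

Lemma cv_shift (u : nat -> R) l c : Un_cv u l -> Un_cv (fun n => c + u (S n)) (c + l).
Proof.
  intros H eps He. destruct (H eps He) as [N HN]. exists N. intros n Hn.
  unfold Rdist. replace (c + u (S n) - (c + l)) with (u (S n) - l) by ring.
  apply HN. lia.
Qed.

Lemma cv_shift' (u v : nat -> R) l c : Un_cv u l -> (forall k, v (S k) = c + u k) -> Un_cv v (c + l).
Proof.
  intros H Hv eps He. destruct (H eps He) as [N HN]. exists (S N). intros n Hn.
  destruct n as [|n]; [lia|]. unfold Rdist. rewrite Hv.
  replace (c + u n - (c + l)) with (u n - l) by ring. apply HN. lia.
Qed.

Lemma SFL_cv fn cv t : Un_cv (fun N => SP fn N t) (SFL fn cv t).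
Proof. unfold SFL. destruct (cv t) as [l hl]. exact hl. Qed.

Lemma CVN_pic a c y0 p0 M : continuity a -> continuity c -> 0 <= M ->
  (forall t, Rabs (a t) <= M) -> (forall t, Rabs (c t) <= M) ->
  CVN_R (dy a c y0 p0) * CVN_R (dp a c y0 p0).
Proof.
  intros ha hc hM hba hbc. set (K := Rabs y0 + Rabs p0).
  assert (hK : 0 <= K) by (unfold K; pose proof (Rabs_pos y0); pose proof (Rabs_pos p0); lra).
  assert (key : forall (r : posreal) n t, Boule 0 r t ->
     K * (M * Rabs t) ^ S n / INR (Factorial.fact (S n)) <= K * (M * r) ^ S n / INR (Factorial.fact (S n))).
  { intros r n t Ht. unfold Boule in Ht. rewrite Rminus_0_r in Ht.
    unfold Rdiv. apply Rmult_le_compat_r. apply Rlt_le, Rinv_0_lt_compat, lt_0_INR, Factorial.lt_O_fact.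
    apply Rmult_le_compat_l; [lra|]. apply pow_incr. split.
    apply Rmult_le_pos; [lra|apply Rabs_pos]. apply Rmult_le_compat_l; lra. }
  assert (hr : forall r : posreal, 0 <= M * r) by (intros r; pose proof (cond_pos r); nra).
  split; intros r; exists (fun k => K * (M * r) ^ S k / INR (Factorial.fact (S k)));
    exists (K * (exp (M * r) - 1)); split.
  - apply exp_tail; [apply hr|exact hK].
  - intros n t Ht. eapply Rle_trans; [|apply (key r n t Ht)].
    apply (pic_bound a c y0 p0 M ha hc hM hba hbc n t).
  - apply exp_tail; [apply hr|exact hK].
  - intros n t Ht. eapply Rle_trans; [|apply (key r n t Ht)].
    apply (pic_bound a c y0 p0 M ha hc hM hba hbc n t).
Qed.

Lemma ode_fst a c y0 p0 M : continuity a -> continuity c -> 0 <= M ->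
  (forall t, Rabs (a t) <= M) -> (forall t, Rabs (c t) <= M) ->
  exists y : R -> R, (forall t, Un_cv (fun n => fst (pic a c y0 p0 n) t) (y t)) /\
   forall p, (forall t, Un_cv (fun n => snd (pic a c y0 p0 n) t) (p t)) ->
   forall t, derivable_pt_lim y t (a t * p t).
Proof.
  intros ha hc hM hba hbc.
  destruct (CVN_pic a c y0 p0 M ha hc hM hba hbc) as [XY XP].
  set (cvy := CVN_R_CVS _ XY). set (cvp := CVN_R_CVS _ XP).
  assert (cdp : forall n, continuity (dp a c y0 p0 n)).
  { intros n. destruct (pic_cont a c y0 p0 ha hc n) as [_ h1].
    destruct (pic_cont a c y0 p0 ha hc (S n)) as [_ h2].
    unfold dp. intros t. apply (continuity_pt_minus (snd (pic a c y0 p0 (S n))) (snd (pic a c y0 p0 n))); auto. }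
  exists (fun t => y0 + SFL _ cvy t). split.
  - intros t. apply (cv_shift' (fun N => SP (dy a c y0 p0) N t)). apply SFL_cv.
    intros k. exact (proj1 (pic_tele a c y0 p0 k t)).
  - intros p Hp t.
    assert (Pe : forall t, p t = p0 + SFL _ cvp t).
    { intros s. apply (UL_sequence (fun n => snd (pic a c y0 p0 n) s)). apply Hp.
      apply (cv_shift' (fun N => SP (dp a c y0 p0) N s)). apply SFL_cv. intros k. exact (proj2 (pic_tele a c y0 p0 k s)). }
    rewrite (Pe t).
    assert (hr : 0 < Rabs t + 1) by (pose proof (Rabs_pos t); lra).
    set (r := mkposreal _ hr).
    apply (derivable_pt_lim_CVU (fun n t => y0 + SP (dy a c y0 p0) (S n) t)
      (fun n t => a t * (p0 + SP (dp a c y0 p0) n t)) (fun t => y0 + SFL _ cvy t)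
      (fun t => a t * (p0 + SFL _ cvp t)) t 0 r).
    + unfold Boule. rewrite Rminus_0_r. simpl. lra.
    + intros s n _. apply (dpl_ext (fst (pic a c y0 p0 (S (S n))))).
      { intros u. exact (proj1 (pic_tele a c y0 p0 (S n) u)). }
      rewrite <- (proj2 (pic_tele a c y0 p0 n s)).
      apply (proj1 (pic_der a c y0 p0 ha hc (S n) s)).
    + intros s _. apply (cv_shift (fun n => SP (dy a c y0 p0) n s)). apply SFL_cv.
    + pose proof (CVN_CVU _ cvp r (XP r)) as HU.
      intros eps He. destruct (HU (eps / (M + 1))) as [N HN].
      { apply Rdiv_lt_0_compat; lra. }
      exists N. intros n s Hn Hs. specialize (HN n s Hn Hs).
      replace (a s * (p0 + SFL (dp a c y0 p0) cvp s) - a s * (p0 + SP (dp a c y0 p0) n s))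
        with (a s * (SFL (dp a c y0 p0) cvp s - SP (dp a c y0 p0) n s)) by ring.
      rewrite Rabs_mult. pose proof (hba s).
      apply (Rle_lt_trans _ ((M + 1) * Rabs (SFL (dp a c y0 p0) cvp s - SP (dp a c y0 p0) n s))).
      { apply Rmult_le_compat_r; [apply Rabs_pos|lra]. }
      replace eps with ((M+1) * (eps / (M+1))) by (field; lra).
      apply Rmult_lt_compat_l; lra.
    + intros s Hs. apply (continuity_pt_mult a (fun t => p0 + SFL _ cvp t)); [apply ha|].
      apply (continuity_pt_plus (fun _ => p0) (SFL _ cvp)). apply continuity_pt_const. intros u v; reflexivity.
      apply (SFL_continuity_pt _ cvp r (XP r)). intros n u _. apply cdp. exact Hs.
Qed.

Lemma CV_const (c : R) : Un_cv (fun _ => c) c.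
Proof. intros eps He. exists 0%nat. intros n _. unfold Rdist. rewrite Rminus_diag, Rabs_R0. lra. Qed.

Lemma ode_exist a c M y0 p0 : continuity a -> continuity c -> 0 <= M ->
  (forall t, Rabs (a t) <= M) -> (forall t, Rabs (c t) <= M) ->
  exists y p : R -> R, y 0 = y0 /\ p 0 = p0 /\
   forall t, derivable_pt_lim y t (a t * p t) /\ derivable_pt_lim p t (c t * y t).
Proof.
  intros ha hc hM hba hbc.
  destruct (ode_fst a c y0 p0 M ha hc hM hba hbc) as [y [Hy Dy]].
  destruct (ode_fst c a p0 y0 M hc ha hM hbc hba) as [p [Hp Dp]].
  assert (Hp' : forall t, Un_cv (fun n => snd (pic a c y0 p0 n) t) (p t)).
  { intros t. eapply Un_cv_ext; [|apply (Hp t)]. intros n. simpl. rewrite (proj1 (pic_swap a c y0 p0 n)). reflexivity. }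
  assert (Hy' : forall t, Un_cv (fun n => snd (pic c a p0 y0 n) t) (y t)).
  { intros t. eapply Un_cv_ext; [|apply (Hy t)]. intros n. simpl. rewrite (proj2 (pic_swap a c y0 p0 n)). reflexivity. }
  exists y, p. split; [|split].
  - apply (UL_sequence (fun n => fst (pic a c y0 p0 n) 0)). apply Hy.
    eapply Un_cv_ext; [|apply (CV_const y0)]. intros n. symmetry. exact (proj1 (pic_at0 a c y0 p0 n)).
  - apply (UL_sequence (fun n => snd (pic a c y0 p0 n) 0)). apply Hp'.
    eapply Un_cv_ext; [|apply (CV_const p0)]. intros n. symmetry. exact (proj2 (pic_at0 a c y0 p0 n)).
  - intros t. split; [apply Dy; exact Hp'|apply Dp; exact Hy'].
Qed.

Lemma der_expK K t : derivable_pt_lim (fun t => exp (K * t)) t (K * exp (K * t)).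
Proof. apply is_derive_Reals. auto_derive; auto. ring. Qed.

Lemma der_mul f g f' g' t : derivable_pt_lim f t f' -> derivable_pt_lim g t g' ->
  derivable_pt_lim (fun t => f t * g t) t (f' * g t + f t * g').
Proof. intros. apply (derivable_pt_lim_mult f g); assumption. Qed.

Lemma der_add f g f' g' t : derivable_pt_lim f t f' -> derivable_pt_lim g t g' ->
  derivable_pt_lim (fun t => f t + g t) t (f' + g').
Proof. intros. apply (derivable_pt_lim_plus f g); assumption. Qed.

Lemma der_sub f g f' g' t : derivable_pt_lim f t f' -> derivable_pt_lim g t g' ->
  derivable_pt_lim (fun t => f t - g t) t (f' - g').
Proof. intros. apply (derivable_pt_lim_minus f g); assumption. Qed.

Lemma der_sq2 f g f' g' t : derivable_pt_lim f t f' -> derivable_pt_lim g t g' ->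
  derivable_pt_lim (fun t => f t * f t + g t * g t) t (2 * f t * f' + 2 * g t * g').
Proof.
  intros Hf Hg. apply (dpl_eq _ _ ((f' * f t + f t * f') + (g' * g t + g t * g'))); [|ring].
  apply der_add; apply der_mul; assumption.
Qed.

Lemma two_ab_le a b k : Rabs (2 * a * b * k) <= Rabs k * (a * a + b * b).
Proof.
  rewrite !Rabs_mult. rewrite (Rabs_right 2) by lra.
  assert (2 * Rabs a * Rabs b <= a * a + b * b).
  { assert (e1 : Rabs a * Rabs a = a * a) by (rewrite <- Rabs_mult; apply Rabs_right; apply Rle_ge, Rle_0_sqr).
    assert (e2 : Rabs b * Rabs b = b * b) by (rewrite <- Rabs_mult; apply Rabs_right; apply Rle_ge, Rle_0_sqr).
    pose proof (Rle_0_sqr (Rabs a - Rabs b)). unfold Rsqr in *. nra. }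
  pose proof (Rabs_pos k). nra.
Qed.

Lemma gronwall (f f' : R -> R) K C d : 0 <= K -> 0 <= C ->
  (forall t, 0 <= t <= d -> derivable_pt_lim f t (f' t)) ->
  (forall t, 0 <= t <= d -> f' t <= K * f t + C) ->
  forall t, 0 <= t <= d -> f t <= (f 0 + C * t) * exp (K * t).
Proof.
  intros hK hC hd hb t ht.
  set (g := fun s => - (f s * exp (- K * s) - C * s)).
  assert (H : g 0 <= g t).
  { refine (mono_deriv g (fun s => - (f' s * exp (-K * s) + f s * (-K * exp (- K * s)) - C)) 0 t _ _ _).
    - lra.
    - intros s hs. unfold g. apply (derivable_pt_lim_opp (fun s => f s * exp (- K * s) - C * s)).
      apply (dpl_eq _ _ ((f' s * exp (-K * s) + f s * (-K * exp (- K * s))) - C * 1)); [|ring].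
      apply der_sub. apply (der_mul f (fun s => exp (-K*s))). apply hd; lra. apply (der_expK (-K)).
      apply (derivable_pt_lim_scal (fun s => s)). apply derivable_pt_lim_id.
    - intros s hs. assert (he : exp (- K * s) <= 1).
      { rewrite <- exp_0. destruct (Req_dec (-K*s) 0) as [e|e]. rewrite e; lra.
        left. apply exp_increasing. nra. }
      pose proof (exp_pos (-K * s)). specialize (hb s ltac:(lra)).
      assert (f' s * exp (- K * s) <= (K * f s + C) * exp (- K * s)) by (apply Rmult_le_compat_r; lra).
      nra. }
  unfold g in H. rewrite Rmult_0_r, exp_0 in H.
  assert (f t * exp (- K * t) <= f 0 + C * t) by lra.
  pose proof (exp_pos (K * t)).
  replace (f t) with (f t * exp (- K * t) * exp (K * t)).
  apply Rmult_le_compat_r; lra.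
  rewrite Rmult_assoc, <- exp_plus. replace (- K * t + K * t) with 0 by ring. rewrite exp_0. ring.
Qed.

Lemma gronwall_back (f f' : R -> R) K c : 0 <= c ->
  (forall t, 0 <= t <= c -> derivable_pt_lim f t (f' t)) ->
  (forall t, 0 <= t <= c -> - K * f t <= f' t) ->
  f 0 <= f c * exp (K * c).
Proof.
  intros hc hd hb.
  set (g := fun s => f s * exp (K * s)).
  assert (H : g 0 <= g c).
  { refine (mono_deriv g (fun s => f' s * exp (K * s) + f s * (K * exp (K * s))) 0 c _ _ _).
    - lra.
    - intros s hs. unfold g. apply (der_mul f (fun s => exp (K*s))). apply hd; lra. apply der_expK.
    - intros s hs. pose proof (exp_pos (K * s)). specialize (hb s hs). nra. }
  unfold g in H. rewrite Rmult_0_r, exp_0, Rmult_1_r in H. exact H.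
Qed.

Lemma cont_pos_nbhd f x : continuity_pt f x -> 0 < f x ->
  exists e, 0 < e /\ forall s, Rabs (s - x) < e -> 0 < f s.
Proof.
  intros Hc Hp. destruct (Hc (f x) Hp) as [e [He H]]. exists e. split; [lra|].
  intros s Hs. destruct (Req_dec s x) as [->|Hne]; [lra|].
  assert (Rdist (f s) (f x) < f x). { apply H. split. split. exact I. auto. exact Hs. }
  unfold Rdist in H0. apply Rabs_def2 in H0. lra.
Qed.

Lemma cont_neg_nbhd f x : continuity_pt f x -> f x < 0 ->
  exists e, 0 < e /\ forall s, Rabs (s - x) < e -> f s < 0.
Proof.
  intros Hc Hp. destruct (cont_pos_nbhd (fun s => - f s) x) as [e [He H]].
  - apply continuity_pt_opp. exact Hc.
  - lra.
  - exists e. split; [lra|]. intros s Hs. specialize (H s Hs). simpl in H. lra.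
Qed.

Definition fz_set (f : R -> R) a b s := a <= s <= b /\ forall t, a <= t <= s -> 0 < f t.

Lemma first_zero f a b : a < b ->
  (forall t, a <= t <= b -> continuity_pt f t) -> 0 < f a -> f b <= 0 ->
  exists c, a < c <= b /\ f c = 0 /\ forall t, a <= t < c -> 0 < f t.
Proof.
  intros hab hc ha hb.
  assert (Hb : bound (fz_set f a b)). { exists b. intros s [Hs _]. lra. }
  assert (Ha : exists s, (fz_set f a b) s). { exists a. split. lra. intros t Ht. replace t with a by lra. exact ha. }
  destruct (completeness (fz_set f a b) Hb Ha) as [c [Hub Hlub]].
  assert (hca : a <= c) by (apply Hub; unfold fz_set; split; [lra|intros t Ht; replace t with a by lra; exact ha]).
  assert (hcb : c <= b) by (apply Hlub; intros s [Hs _]; lra).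
  assert (below : forall t, a <= t < c -> 0 < f t).
  { intros t Ht. destruct (Classical_Prop.classic (exists s, (fz_set f a b) s /\ t < s)) as [[s [[_ Hs] hts]]|Hn].
    - apply Hs. lra.
    - exfalso. assert (c <= t). { apply Hlub. intros s Hs. destruct (Rle_or_lt s t); [lra|]. exfalso; apply Hn; exists s; auto. }
      lra. }
  destruct (cont_pos_nbhd f a (hc a ltac:(lra)) ha) as [e0 [he0 H0]].
  assert (hca' : a < c).
  { assert ((fz_set f a b) (Rmin (a + e0/2) b)).
    { split. split; [apply Rmin_glb; lra| apply Rmin_r].
      intros t Ht. apply H0. pose proof (Rmin_l (a + e0/2) b). rewrite Rabs_right; lra. }
    apply Hub in H. assert (a < Rmin (a + e0/2) b) by (apply Rmin_glb_lt; lra). lra. }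
  exists c. split; [lra|]. split; [|exact below].
  destruct (Rtotal_order (f c) 0) as [Hl|[He|Hg]]; [exfalso| exact He| exfalso].
  - destruct (cont_neg_nbhd f c (hc c ltac:(lra)) Hl) as [e [he H]].
    assert (h1 : a <= Rmax a (c - e/2) < c). { split. apply Rmax_l. apply Rmax_lub_lt; lra. }
    assert (f (Rmax a (c - e/2)) < 0). { apply H. pose proof (Rmax_r a (c - e/2)). rewrite Rabs_left; lra. }
    pose proof (below _ h1). lra.
  - destruct (Req_dec c b) as [->|Hne]; [lra|].
    destruct (cont_pos_nbhd f c (hc c ltac:(lra)) Hg) as [e [he H]].
    assert ((fz_set f a b) (Rmin (c + e/2) b)).
    { split. split; [pose proof (Rmin_glb (c + e/2) b c); lra| apply Rmin_r].
      intros t Ht. destruct (Rlt_or_le t c). apply below; lra.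
      apply H. pose proof (Rmin_l (c + e/2) b). rewrite Rabs_right; lra. }
    apply Hub in H1. assert (c < Rmin (c + e/2) b) by (apply Rmin_glb_lt; lra). lra.
Qed.

Lemma der_left_nonpos f x l e : derivable_pt_lim f x l -> f x = 0 -> 0 < e ->
  (forall s, x - e < s < x -> 0 <= f s) -> l <= 0.
Proof.
  intros Hd H0 He Hs. destruct (Rle_or_lt l 0) as [|Hl]; [assumption|exfalso].
  destruct (Hd l Hl) as [d Hdd].
  set (hh := - Rmin (d/2) (e/2)).
  assert (hpos : 0 < Rmin (d/2) (e/2)) by (apply Rmin_glb_lt; pose proof (cond_pos d); lra).
  assert (hh <> 0) by (unfold hh; lra).
  assert (Rabs hh < d) by (unfold hh; rewrite Rabs_left by lra; pose proof (Rmin_l (d/2) (e/2)); pose proof (cond_pos d); lra).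
  specialize (Hdd hh H H1). rewrite H0 in Hdd.
  assert (0 <= f (x + hh)) by (apply Hs; unfold hh; pose proof (Rmin_r (d/2) (e/2)); lra).
  assert ((f (x + hh) - 0) / hh <= 0).
  { unfold Rdiv. replace (f (x + hh) - 0) with (f (x + hh)) by ring.
    assert (/ hh < 0) by (apply Rinv_lt_0_compat; unfold hh; lra). nra. }
  apply Rabs_def2 in Hdd. lra.
Qed.

Lemma der_right_nonneg f x l e : derivable_pt_lim f x l -> f x = 0 -> 0 < e ->
  (forall s, x < s < x + e -> 0 <= f s) -> 0 <= l.
Proof.
  intros Hd H0 He Hs. destruct (Rle_or_lt 0 l) as [|Hl]; [assumption|exfalso].
  destruct (Hd (- l) ltac:(lra)) as [d Hdd].
  assert (hpos : 0 < Rmin (d/2) (e/2)) by (apply Rmin_glb_lt; pose proof (cond_pos d); lra).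
  assert (hne : Rmin (d/2) (e/2) <> 0) by lra.
  assert (hlt : Rabs (Rmin (d/2) (e/2)) < d) by (rewrite Rabs_right by lra; pose proof (Rmin_l (d/2) (e/2)); pose proof (cond_pos d); lra).
  specialize (Hdd _ hne hlt). rewrite H0 in Hdd.
  assert (0 <= f (x + Rmin (d/2) (e/2))) by (apply Hs; pose proof (Rmin_r (d/2) (e/2)); lra).
  assert (0 <= (f (x + Rmin (d/2) (e/2)) - 0) / Rmin (d/2) (e/2)).
  { unfold Rdiv. replace (f (x + Rmin (d/2) (e/2)) - 0) with (f (x + Rmin (d/2) (e/2))) by ring.
    assert (0 < / Rmin (d/2) (e/2)) by (apply Rinv_0_lt_compat; lra). nra. }
  apply Rabs_def2 in Hdd. lra.
Qed.

Lemma left_limit_nonneg f x e : continuity_pt f x -> 0 < e ->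
  (forall s, x - e < s < x -> 0 < f s) -> 0 <= f x.
Proof.
  intros Hc He Hs. destruct (Rle_or_lt 0 (f x)) as [|Hl]; [assumption|exfalso].
  destruct (cont_neg_nbhd f x Hc Hl) as [e' [he' H]].
  assert (hpos : 0 < Rmin (e/2) (e'/2)) by (apply Rmin_glb_lt; lra).
  assert (f (x - Rmin (e/2) (e'/2)) < 0).
  { apply H. rewrite Rabs_left by lra. pose proof (Rmin_r (e/2) (e'/2)). lra. }
  assert (0 < f (x - Rmin (e/2) (e'/2))).
  { apply Hs. pose proof (Rmin_l (e/2) (e'/2)). lra. }
  lra.
Qed.

Lemma dcont f x l : derivable_pt_lim f x l -> continuity_pt f x.
Proof. intros H. apply derivable_continuous_pt. exists l. exact H. Qed.

Definition sol (d : R) (w V : R -> R) (E : R) (y p : R -> R) : Prop :=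
  y 0 = 1 /\ p 0 = -1 /\ forall t, 0 <= t <= d ->
   derivable_pt_lim y t (p t / w t) /\ derivable_pt_lim p t (w t * (V t - E) * y t).

Definition good (d w0 : R) (w V : R -> R) (Vmax : R) : Prop :=
  0 < d /\ 0 < w0 /\ 0 <= Vmax /\ forall t, 0 <= t <= d -> w0 <= w t <= 1 /\ 0 <= V t <= Vmax.

Lemma exp_le_mono x y : x <= y -> exp x <= exp y.
Proof. intros H. destruct (Rle_lt_or_eq_dec x y H) as [h|h]. left; apply exp_increasing; exact h. rewrite h; right; reflexivity. Qed.

Lemma coef_bound d w0 w V Vmax E t : good d w0 w V Vmax -> 0 <= t <= d ->
  Rabs (/ w t + w t * (V t - E)) <= / w0 + Vmax + Rabs E.
Proof.
  intros [hd [hw0 [hV H]]] ht. destruct (H t ht) as [[h1 h2] [h3 h4]].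
  eapply Rle_trans; [apply Rabs_triang|].
  assert (Rabs (/ w t) <= / w0).
  { rewrite Rabs_right. apply Rinv_le_contravar; lra. apply Rle_ge, Rlt_le, Rinv_0_lt_compat; lra. }
  assert (Rabs (w t * (V t - E)) <= Vmax + Rabs E).
  { rewrite Rabs_mult. rewrite (Rabs_right (w t)) by lra.
    assert (Rabs (V t - E) <= Vmax + Rabs E).
    { eapply Rle_trans; [apply Rabs_triang|]. rewrite Rabs_Ropp. rewrite (Rabs_right (V t)) by lra. lra. }
    pose proof (Rabs_pos (V t - E)). nra. }
  lra.
Qed.

Lemma energy_der d w V E y p t : sol d w V E y p -> 0 <= t <= d -> w t <> 0 ->
  derivable_pt_lim (fun t => y t * y t + p t * p t) t
    (2 * y t * p t * (/ w t + w t * (V t - E))).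
Proof.
  intros [_ [_ H]] ht hw. destruct (H t ht) as [H1 H2].
  eapply dpl_eq. apply der_sq2; [exact H1|exact H2]. field. exact hw.
Qed.

Lemma sol_nodz d w0 w V Vmax E y p c : good d w0 w V Vmax -> sol d w V E y p ->
  0 <= c <= d -> y c = 0 -> p c = 0 -> False.
Proof.
  intros hg hs hc hy hp.
  assert (hg' := hg). destruct hg' as [hd [hw0 [hV Hw]]].
  set (K := / w0 + Vmax + Rabs E).
  pose proof (gronwall_back (fun t => y t * y t + p t * p t)
     (fun t => 2 * y t * p t * (/ w t + w t * (V t - E))) K c ltac:(lra)) as G.
  assert (G' : y 0 * y 0 + p 0 * p 0 <= (y c * y c + p c * p c) * exp (K * c)).
  { apply G.
    - intros t ht. apply (energy_der d w V E y p t hs). lra.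
      destruct (Hw t ltac:(lra)) as [[h1 _] _]. lra.
    - intros t ht. cbv beta.
      pose proof (two_ab_le (y t) (p t) (/ w t + w t * (V t - E))) as T.
      pose proof (coef_bound d w0 w V Vmax E t hg ltac:(lra)) as B.
      assert (HF : 0 <= y t * y t + p t * p t) by (pose proof (Rle_0_sqr (y t)); pose proof (Rle_0_sqr (p t)); unfold Rsqr in *; lra).
      assert (HX : Rabs (2 * y t * p t * (/ w t + w t * (V t - E))) <= K * (y t * y t + p t * p t)).
      { eapply Rle_trans; [exact T|]. apply Rmult_le_compat_r; [exact HF|exact B]. }
      pose proof (Rle_abs (- (2 * y t * p t * (/ w t + w t * (V t - E))))) as hh.
      rewrite Rabs_Ropp in hh. replace (- K * (y t * y t + p t * p t)) with (- (K * (y t * y t + p t * p t))) by ring.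
      lra. }
  destruct hs as [h0 [hp0 _]]. rewrite hy, hp, h0, hp0 in G'. 
  replace ((0 * 0 + 0 * 0) * exp (K * c)) with 0 in G' by ring. lra.
Qed.

Lemma sol_apriori d w0 w V Vmax E K y p : good d w0 w V Vmax -> sol d w V E y p ->
  / w0 + Vmax + Rabs E <= K ->
  forall t, 0 <= t <= d -> y t * y t + p t * p t <= 2 * exp (K * d).
Proof.
  intros hg hs hK t ht.
  assert (hg' := hg). destruct hg' as [hd [hw0 [hV Hw]]].
  assert (K0 : 0 <= K) by (pose proof (Rinv_0_lt_compat w0 hw0); pose proof (Rabs_pos E); lra).
  pose proof (gronwall (fun t => y t * y t + p t * p t)
     (fun t => 2 * y t * p t * (/ w t + w t * (V t - E))) K 0 d K0 ltac:(lra)) as G.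
  assert (G' : y t * y t + p t * p t <= (y 0 * y 0 + p 0 * p 0 + 0 * t) * exp (K * t)).
  { apply G; [| |exact ht].
    - intros s hs'. apply (energy_der d w V E y p s hs hs').
      destruct (Hw s hs') as [[h1 _] _]. lra.
    - intros s hs'. cbv beta.
      pose proof (two_ab_le (y s) (p s) (/ w s + w s * (V s - E))) as T.
      pose proof (coef_bound d w0 w V Vmax E s hg hs') as B.
      assert (HF : 0 <= y s * y s + p s * p s) by (pose proof (Rle_0_sqr (y s)); pose proof (Rle_0_sqr (p s)); unfold Rsqr in *; lra).
      assert (HX : Rabs (2 * y s * p s * (/ w s + w s * (V s - E))) <= K * (y s * y s + p s * p s)).
      { eapply Rle_trans; [exact T|]. apply Rmult_le_compat_r; [exact HF|lra]. }
      pose proof (Rle_abs (2 * y s * p s * (/ w s + w s * (V s - E)))) as hh. lra. }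
  destruct hs as [h0 [hp0 _]]. rewrite h0, hp0 in G'.
  replace (1 * 1 + -1 * -1 + 0 * t) with 2 in G' by ring.
  eapply Rle_trans; [exact G'|]. apply Rmult_le_compat_l; [lra|].
  apply exp_le_mono. apply Rmult_le_compat_l; lra.
Qed.

Definition Lc d w0 Vmax R0 := 2 * exp ((/ w0 + Vmax + R0) * d) * d * exp ((/ w0 + Vmax + R0 + 1) * d).

Lemma sol_lip d w0 w V Vmax E1 E2 R0 y1 p1 y2 p2 :
  good d w0 w V Vmax -> sol d w V E1 y1 p1 -> sol d w V E2 y2 p2 ->
  Rabs E1 <= R0 -> Rabs E2 <= R0 ->
  forall t, 0 <= t <= d -> (y1 t - y2 t) * (y1 t - y2 t) <= Lc d w0 Vmax R0 * ((E1 - E2) * (E1 - E2)).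
Proof.
  intros hg hs1 hs2 hE1 hE2 t ht.
  assert (hg' := hg). destruct hg' as [hd [hw0 [hV Hw]]].
  set (K := / w0 + Vmax + R0).
  assert (K0 : 0 <= K) by (unfold K; pose proof (Rinv_0_lt_compat w0 hw0); pose proof (Rabs_pos E1); lra).
  assert (AP : forall s, 0 <= s <= d -> y2 s * y2 s <= 2 * exp (K * d)).
  { intros s hs. pose proof (sol_apriori d w0 w V Vmax E2 K y2 p2 hg hs2 ltac:(unfold K; lra) s hs).
    pose proof (Rle_0_sqr (p2 s)). unfold Rsqr in *. lra. }
  set (C := (E1 - E2) * (E1 - E2) * (2 * exp (K * d))).
  assert (C0 : 0 <= C) by (unfold C; pose proof (Rle_0_sqr (E1 - E2)); pose proof (exp_pos (K*d)); unfold Rsqr in *; nra).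
  destruct hs1 as [a1 [b1 D1]]. destruct hs2 as [a2 [b2 D2]].
  pose proof (gronwall (fun t => (y1 t - y2 t) * (y1 t - y2 t) + (p1 t - p2 t) * (p1 t - p2 t))
     (fun t => 2 * (y1 t - y2 t) * (p1 t / w t - p2 t / w t) + 2 * (p1 t - p2 t) * (w t * (V t - E1) * y1 t - w t * (V t - E2) * y2 t))
     (K + 1) C d ltac:(lra) C0) as G.
  assert (G' : (y1 t - y2 t) * (y1 t - y2 t) + (p1 t - p2 t) * (p1 t - p2 t) <=
     ((y1 0 - y2 0) * (y1 0 - y2 0) + (p1 0 - p2 0) * (p1 0 - p2 0) + C * t) * exp ((K + 1) * t)).
  { apply G; [| |exact ht].
    - intros s hs. apply (der_sq2 (fun t => y1 t - y2 t) (fun t => p1 t - p2 t)).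
      + apply der_sub; [apply (D1 s hs)|apply (D2 s hs)].
      + apply der_sub; [apply (D1 s hs)|apply (D2 s hs)].
    - intros s hs. cbv beta.
      destruct (Hw s hs) as [[hw1 hw2] [hv1 hv2]].
      set (zy := y1 s - y2 s). set (zp := p1 s - p2 s).
      assert (eq : 2 * zy * (p1 s / w s - p2 s / w s) + 2 * zp * (w s * (V s - E1) * y1 s - w s * (V s - E2) * y2 s)
         = 2 * zy * zp * (/ w s + w s * (V s - E1)) + 2 * zp * (w s * (E2 - E1) * y2 s)).
      { unfold zy, zp. field. lra. }
      rewrite eq.
      pose proof (two_ab_le zy zp (/ w s + w s * (V s - E1))) as T.
      pose proof (coef_bound d w0 w V Vmax E1 s hg hs) as B.
      assert (HF : 0 <= zy * zy + zp * zp) by (pose proof (Rle_0_sqr zy); pose proof (Rle_0_sqr zp); unfold Rsqr in *; lra).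
      assert (HX : Rabs (2 * zy * zp * (/ w s + w s * (V s - E1))) <= K * (zy * zy + zp * zp)).
      { eapply Rle_trans; [exact T|]. apply Rmult_le_compat_r; [exact HF|unfold K; lra]. }
      pose proof (Rle_abs (2 * zy * zp * (/ w s + w s * (V s - E1)))) as hh.
      assert (H2 : 2 * zp * (w s * (E2 - E1) * y2 s) <= zp * zp + (w s * (E2 - E1) * y2 s) * (w s * (E2 - E1) * y2 s)).
      { pose proof (Rle_0_sqr (zp - w s * (E2 - E1) * y2 s)). unfold Rsqr in *. nra. }
      assert (H3 : (w s * (E2 - E1) * y2 s) * (w s * (E2 - E1) * y2 s) <= C).
      { unfold C. replace ((w s * (E2 - E1) * y2 s) * (w s * (E2 - E1) * y2 s)) with
          ((w s * w s) * ((E1 - E2) * (E1 - E2)) * (y2 s * y2 s)) by ring.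
        pose proof (AP s hs). pose proof (Rle_0_sqr (E1 - E2)). pose proof (Rle_0_sqr (y2 s)). unfold Rsqr in *.
        assert (w s * w s <= 1) by nra.
        assert (0 <= w s * w s) by nra.
        apply (Rle_trans _ (1 * ((E1 - E2) * (E1 - E2)) * (y2 s * y2 s))).
        { apply Rmult_le_compat_r; [lra|]. apply Rmult_le_compat_r; lra. }
        rewrite Rmult_1_l. apply Rmult_le_compat_l; lra. }
      assert (0 <= zy * zy) by (pose proof (Rle_0_sqr zy); unfold Rsqr in *; lra).
      nra. }
  rewrite a1, a2, b1, b2 in G'.
  replace ((1 - 1) * (1 - 1) + (-1 - -1) * (-1 - -1) + C * t) with (C * t) in G' by ring.
  assert (0 <= (p1 t - p2 t) * (p1 t - p2 t)) by (pose proof (Rle_0_sqr (p1 t - p2 t)); unfold Rsqr in *; lra).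
  unfold Lc. fold K.
  apply (Rle_trans _ (C * t * exp ((K + 1) * t))); [lra|].
  unfold C.
  assert (exp ((K + 1) * t) <= exp ((K + 1) * d)).
  { apply exp_le_mono. apply Rmult_le_compat_l; lra. }
  pose proof (exp_pos ((K + 1) * t)). pose proof (exp_pos (K * d)).
  pose proof (Rle_0_sqr (E1 - E2)). unfold Rsqr in *.
  replace (2 * exp (K * d) * d * exp ((K + 1) * d) * ((E1 - E2) * (E1 - E2))) with
     ((E1 - E2) * (E1 - E2) * (2 * exp (K * d)) * d * exp ((K + 1) * d)) by ring.
  fold C. apply Rmult_le_compat.
  - apply Rmult_le_pos; lra.
  - lra.
  - apply Rmult_le_compat_l; lra.
  - exact H0.
Qed.

Lemma sol_pos_neg d w0 w V Vmax E y p : good d w0 w V Vmax -> sol d w V E y p ->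
  E <= - (/ (w0 * w0)) - 1 -> forall t, 0 <= t <= d -> 0 < y t.
Proof.
  intros hg hs hE t ht.
  assert (hg' := hg). destruct hg' as [hd [hw0 [hV Hw]]].
  destruct hs as [h0 [hp0 D]].
  destruct (Rlt_or_le 0 (y t)) as [|hyt]; [assumption|exfalso].
  assert (htp : 0 < t). { destruct (Req_dec t 0) as [->|hne]; [rewrite h0 in hyt; lra|lra]. }
  destruct (first_zero y 0 t htp) as [c [hc [hyc hpos]]].
  { intros s hs. apply (dcont y s (p s / w s)). apply D. lra. }
  { rewrite h0; lra. }
  { exact hyt. }
  set (Phi := fun s => y s * p s + y s * y s).
  set (Phi' := fun s => (p s / w s) * p s + y s * (w s * (V s - E) * y s) + 2 * y s * (p s / w s)).
  destruct (MVT_cor2 Phi Phi' 0 c ltac:(lra)) as [xi [hxi hxr]].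
  { intros s hs. destruct (D s ltac:(lra)) as [D1 D2]. unfold Phi, Phi'.
    eapply dpl_eq. apply der_add; apply der_mul; eauto. ring. }
  unfold Phi in hxi. rewrite hyc, h0, hp0 in hxi.
  replace (0 * p c + 0 * 0 - (1 * -1 + 1 * 1)) with 0 in hxi by ring.
  assert (hy : 0 < y xi) by (apply hpos; lra).
  destruct (Hw xi ltac:(lra)) as [[hw1 hw2] [hv1 hv2]].
  assert (hw : 0 < w xi) by lra.
  assert (key : Phi' xi = (p xi + y xi) * (p xi + y xi) / w xi + (w xi * (V xi - E) - / w xi) * (y xi * y xi)).
  { unfold Phi'. field. lra. }
  assert (h1 : 0 <= (p xi + y xi) * (p xi + y xi) / w xi).
  { apply Rmult_le_pos. pose proof (Rle_0_sqr (p xi + y xi)); unfold Rsqr in *; lra. apply Rlt_le, Rinv_0_lt_compat; lra. }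
  assert (hinv : / w xi <= / w0) by (apply Rinv_le_contravar; lra).
  assert (hq : / (w0 * w0) + 1 <= V xi - E) by lra.
  assert (hwq : w0 * (/ (w0 * w0) + 1) <= w xi * (V xi - E)).
  { apply Rmult_le_compat; try lra. pose proof (Rinv_0_lt_compat (w0*w0)). nra. }
  replace (w0 * (/ (w0 * w0) + 1)) with (/ w0 + w0) in hwq by (field; lra).
  assert (h2 : 0 < (w xi * (V xi - E) - / w xi) * (y xi * y xi)).
  { apply Rmult_lt_0_compat; nra. }
  assert (Phi' xi * (c - 0) > 0) by (apply Rmult_gt_0_compat; lra).
  lra.
Qed.

Lemma sturm d w0 w V Vm Vmax s lam y p v v1 v2 a :
  good d w0 w V Vmax -> w 0 = 1 -> (forall t, 0 <= t <= d -> derivable_pt_lim w t (-s)) ->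
  sol d w V lam y p ->
  (forall t, 0 <= t <= d -> derivable_pt_lim v t (v1 t) /\ derivable_pt_lim v1 t (v2 t) /\
     - (w t * v2 t - s * v1 t) / w t + Vm t * v t = lam * v t) ->
  v1 0 = - v 0 -> 0 < a <= d -> v a = 0 -> (forall t, 0 <= t < a -> 0 < v t) ->
  (forall t, 0 <= t <= d -> V t < Vm t) -> exists c, 0 < c < a /\ y c <= 0.
Proof.
  intros hg hw0' Dw hs Hv hv10 ha hva hvpos hVV.
  assert (hg' := hg). destruct hg' as [hd [hw0 [hV Hw]]].
  destruct hs as [h0 [hp0 D]].
  apply Classical_Pred_Type.not_all_not_ex. intros Hn.
  assert (hy : forall c, 0 < c < a -> 0 < y c).
  { intros c hc. destruct (Rlt_or_le 0 (y c)) as [|h]; [assumption|exfalso; apply (Hn c); split; assumption]. }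
  set (W := fun t => p t * v t - w t * y t * v1 t).
  set (W' := fun t => (w t * (V t - lam) * y t) * v t + p t * v1 t
                 - (((-s) * y t + w t * (p t / w t)) * v1 t + (w t * y t) * v2 t)).
  destruct (MVT_cor2 W W' 0 a ltac:(lra)) as [xi [hxi hxr]].
  { intros t ht. destruct (D t ltac:(lra)) as [D1 D2]. destruct (Hv t ltac:(lra)) as [V1 [V2 _]].
    unfold W, W'. apply der_sub. apply der_mul; assumption.
    apply (der_mul (fun t => w t * y t) v1). apply der_mul. apply Dw; lra. exact D1. exact V2. }
  assert (W0 : W 0 = 0) by (unfold W; rewrite hp0, hw0', h0, hv10; ring).
  destruct (Hw a ltac:(lra)) as [[hwa1 hwa2] _].
  assert (ya : 0 <= y a).
  { apply (left_limit_nonneg y a a). apply (dcont y a (p a / w a)). apply D; lra. lra.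
    intros t ht. apply hy. lra. }
  assert (v1a : v1 a <= 0).
  { destruct (Hv a ltac:(lra)) as [V1 _]. apply (der_left_nonpos v a (v1 a) a V1 hva); [lra|].
    intros t ht. left. apply hvpos. lra. }
  assert (Wa : 0 <= W a).
  { unfold W. rewrite hva. replace (p a * 0 - w a * y a * v1 a) with (w a * y a * (- v1 a)) by ring.
    apply Rmult_le_pos; [apply Rmult_le_pos; lra|lra]. }
  destruct (Hw xi ltac:(lra)) as [[hw1 hw2] _].
  destruct (Hv xi ltac:(lra)) as [_ [_ Hode]].
  assert (eqW : W' xi = w xi * y xi * v xi * (V xi - Vm xi)
     + w xi * y xi * (- (w xi * v2 xi - s * v1 xi) / w xi + Vm xi * v xi - lam * v xi)).
  { unfold W'. field. lra. }
  rewrite Hode in eqW. replace (lam * v xi - lam * v xi) with 0 in eqW by ring.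
  assert (hyx : 0 < y xi) by (apply hy; lra).
  assert (hvx : 0 < v xi) by (apply hvpos; lra).
  assert (hVx : V xi - Vm xi < 0) by (pose proof (hVV xi ltac:(lra)); lra).
  assert (W' xi < 0).
  { rewrite eqW. rewrite Rmult_0_r, Rplus_0_r.
    assert (0 < w xi * y xi * v xi) by (apply Rmult_lt_0_compat; [apply Rmult_lt_0_compat|]; lra).
    nra. }
  assert (W' xi * (a - 0) < 0) by (apply Rmult_neg_pos; lra) || idtac.
  nra.
Qed.

Definition posset d w V (E : R) : Prop :=
  forall E', E' <= E -> forall y p, sol d w V E' y p -> forall t, 0 <= t <= d -> 0 < y t.

Lemma no_interior_zero d w0 w V Vmax E y p t0 : good d w0 w V Vmax -> sol d w V E y p ->
  (forall t, 0 <= t <= d -> 0 <= y t) -> 0 < t0 < d -> y t0 = 0 -> False.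
Proof.
  intros hg hs hnn ht0 hy0.
  assert (hg' := hg). destruct hg' as [hd [hw0 [hV Hw]]].
  assert (hs' := hs). destruct hs' as [h0 [hp0 D]].
  destruct (D t0 ltac:(lra)) as [D1 _].
  assert (l1 : p t0 / w t0 <= 0).
  { apply (der_left_nonpos y t0 _ t0 D1 hy0); [lra|]. intros s hs0. apply hnn. lra. }
  assert (l2 : 0 <= p t0 / w t0).
  { apply (der_right_nonneg y t0 _ (d - t0) D1 hy0); [lra|]. intros s hs0. apply hnn. lra. }
  destruct (Hw t0 ltac:(lra)) as [[hw1 _] _].
  assert (p t0 = 0).
  { assert (p t0 / w t0 = 0) by lra. unfold Rdiv in H.
    apply Rmult_integral in H. destruct H as [H|H]; [exact H|].
    exfalso. apply (Rinv_neq_0_compat (w t0)); [lra|exact H]. }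
  apply (sol_nodz d w0 w V Vmax E y p t0 hg hs ltac:(lra) hy0 H).
Qed.

Lemma shoot d w0 w V Vmax lam :
  good d w0 w V Vmax ->
  (forall E, exists y p, sol d w V E y p) ->
  (forall y p, sol d w V lam y p -> exists c, 0 < c < d /\ y c <= 0) ->
  exists E y p, E < lam /\ sol d w V E y p /\ y d = 0.
Proof.
  intros hg Hex Hneg.
  assert (hg' := hg). destruct hg' as [hd [hw0 [hV Hw]]].
  set (E0 := - (/ (w0 * w0)) - 1).
  assert (S0 : posset d w V E0).
  { intros E' hE' y p hs t ht. apply (sol_pos_neg d w0 w V Vmax E' y p hg hs); [unfold E0 in hE'; lra|exact ht]. }
  assert (Sub : forall E, posset d w V E -> E <= lam).
  { intros E hE. destruct (Rle_or_lt E lam) as [|hl]; [assumption|exfalso].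
    destruct (Hex lam) as [y [p hs]]. destruct (Hneg y p hs) as [c [hc hyc]].
    pose proof (hE lam ltac:(lra) y p hs c ltac:(lra)). lra. }
  destruct (completeness (posset d w V)) as [Es [Hub Hlub]].
  { exists lam. intros E hE. apply Sub, hE. }
  { exists E0. exact S0. }
  assert (hE0s : E0 <= Es) by (apply Hub; exact S0).
  assert (hEsl : Es <= lam) by (apply Hlub; intros E hE; apply Sub, hE).
  assert (down : forall E, E < Es -> forall y p, sol d w V E y p -> forall t, 0 <= t <= d -> 0 < y t).
  { intros E hE y p hs t ht.
    destruct (Classical_Prop.classic (exists E'', posset d w V E'' /\ E < E'')) as [[E'' [hS hlt]]|hn].
    - apply (hS E ltac:(lra) y p hs t ht).
    - exfalso. assert (Es <= E). { apply Hlub. intros x hx. destruct (Rle_or_lt x E); [assumption|exfalso; apply hn; exists x; auto]. }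
      lra. }
  set (R0 := Rabs E0 + Rabs lam + 2).
  set (L := Lc d w0 Vmax R0).
  assert (hL : 0 <= L).
  { unfold L, Lc. pose proof (exp_pos ((/ w0 + Vmax + R0) * d)). pose proof (exp_pos ((/ w0 + Vmax + R0 + 1) * d)).
    apply Rmult_le_pos; [|lra]. apply Rmult_le_pos; lra. }
  assert (hREs : Rabs Es <= Rabs E0 + Rabs lam).
  { unfold Rabs; destruct (Rcase_abs Es); destruct (Rcase_abs E0); destruct (Rcase_abs lam); lra. }
  destruct (Hex Es) as [ys [ps hss]].
  assert (hss' := hss). destruct hss' as [hs0 [hps0 Ds]].
  assert (small : forall z eta, 0 < z -> eta = Rmin 1 (z / (L + 1)) -> 0 < eta /\ eta <= 1 /\ L * (eta * eta) < z * z).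
  { intros z eta hz ->. assert (0 < z / (L+1)) by (apply Rdiv_lt_0_compat; lra).
    assert (0 < Rmin 1 (z / (L + 1))) by (apply Rmin_glb_lt; lra).
    split; [lra|]. split; [apply Rmin_l|].
    pose proof (Rmin_r 1 (z / (L + 1))).
    assert (Rmin 1 (z / (L + 1)) * (L + 1) <= z).
    { apply (Rle_trans _ (z / (L+1) * (L+1))). apply Rmult_le_compat_r; lra. right; field; lra. }
    remember (Rmin 1 (z / (L + 1))) as e.
    assert (h1 : (e * (L + 1)) * (e * (L + 1)) <= z * z) by (apply Rmult_le_compat; nra).
    assert (h2 : L * (e * e) < (e * (L + 1)) * (e * (L + 1))).
    { replace ((e * (L + 1)) * (e * (L + 1))) with ((e * e) * ((L + 1) * (L + 1))) by ring.
      rewrite (Rmult_comm L). apply Rmult_lt_compat_l; nra. }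
    lra. }
  assert (C1 : forall t, 0 <= t <= d -> 0 <= ys t).
  { intros t ht. destruct (Rle_or_lt 0 (ys t)) as [|hneg]; [assumption|exfalso].
    destruct (small (- ys t) (Rmin 1 (- ys t / (L + 1))) ltac:(lra) eq_refl) as [he1 [he2 he3]].
    remember (Rmin 1 (- ys t / (L + 1))) as eta eqn:Heta.
    destruct (Hex (Es - eta)) as [y1 [p1 hs1]].
    pose proof (down (Es - eta) ltac:(lra) y1 p1 hs1 t ht) as hp.
    pose proof (sol_lip d w0 w V Vmax (Es - eta) Es R0 y1 p1 ys ps hg hs1 hss) as Lp.
    assert (Rabs (Es - eta) <= R0).
    { unfold R0. eapply Rle_trans; [apply Rabs_triang|]. rewrite Rabs_Ropp, (Rabs_right eta) by lra. lra. }
    assert (Rabs Es <= R0) by (unfold R0; lra).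
    specialize (Lp H H0 t ht). fold L in Lp.
    replace ((Es - eta - Es) * (Es - eta - Es)) with (eta * eta) in Lp by ring.
    nra. }
  assert (noint : forall t, 0 < t < d -> ys t = 0 -> False).
  { intros t ht hz. exact (no_interior_zero d w0 w V Vmax Es ys ps t hg hss C1 ht hz). }
  assert (C2 : exists t, 0 <= t <= d /\ ys t = 0).
  { apply Classical_Pred_Type.not_all_not_ex. intros hn.
    assert (hpos : forall t, 0 <= t <= d -> 0 < ys t).
    { intros t ht. destruct (C1 t ht) as [|h]; [assumption|exfalso; apply (hn t); auto]. }
    destruct (continuity_ab_min ys 0 d ltac:(lra)) as [tm [Htm htm]].
    { intros t ht. apply (dcont ys t (ps t / w t)). apply Ds; lra. }
    set (m0 := ys tm). assert (hm0 : 0 < m0) by (apply hpos; exact htm).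
    destruct (small m0 (Rmin 1 (m0 / (L + 1))) hm0 eq_refl) as [he1 [he2 he3]].
    remember (Rmin 1 (m0 / (L + 1))) as eta eqn:Heta.
    assert (posset d w V (Es + eta)).
    { intros E' hE' y p hs t ht.
      destruct (Rlt_or_le E' Es) as [hlt|hge].
      - apply (down E' hlt y p hs t ht).
      - pose proof (sol_lip d w0 w V Vmax E' Es R0 y p ys ps hg hs hss) as Lp.
        assert (Rabs E' <= R0).
        { assert (Rabs E' <= Rabs Es + 1) by (unfold Rabs; destruct (Rcase_abs E'); destruct (Rcase_abs Es); lra).
          unfold R0. lra. }
        assert (Rabs Es <= R0) by (unfold R0; lra).
        specialize (Lp H H0 t ht). fold L in Lp.
        assert ((E' - Es) * (E' - Es) <= eta * eta) by nra.
        assert (L * ((E' - Es) * (E' - Es)) <= L * (eta * eta)) by (apply Rmult_le_compat_l; lra).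
        pose proof (Htm t ht). fold m0 in H3.
        nra. }
    apply Hub in H. lra. }
  destruct C2 as [t0 [ht0 hz0]].
  assert (t0 = d).
  { destruct (Req_dec t0 0) as [->|hne]; [rewrite hs0 in hz0; lra|].
    destruct (Req_dec t0 d) as [|hne']; [assumption|exfalso]. apply (noint t0); [lra|exact hz0]. }
  subst t0.
  exists Es, ys, ps. split; [|split; [exact hss|exact hz0]].
  destruct (Req_dec Es lam) as [heq|hne]; [exfalso|lra].
  rewrite heq in hss. destruct (Hneg ys ps hss) as [c [hc hyc]].
  apply (noint c hc). pose proof (C1 c ltac:(lra)). lra.
Qed.

Lemma v0_nonzero d w0 w Vm Vmax s lam v v1 v2 :
  good d w0 w Vm Vmax -> 0 <= s ->
  (forall t, 0 <= t <= d -> derivable_pt_lim v t (v1 t) /\ derivable_pt_lim v1 t (v2 t) /\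
     - (w t * v2 t - s * v1 t) / w t + Vm t * v t = lam * v t) ->
  v1 0 = - v 0 -> (exists t, 0 <= t <= d /\ v t <> 0) -> v 0 <> 0.
Proof.
  intros hg hs Hv hv10 [t1 [ht1 hvt1]] hv0.
  assert (hg' := hg). destruct hg' as [hd [hw0 [hV Hw]]].
  set (K := 1 + Vmax + Rabs lam + 2 * s / w0).
  assert (K0 : 0 <= K).
  { unfold K. pose proof (Rabs_pos lam). assert (0 <= 2 * s / w0) by (apply Rmult_le_pos; [lra|apply Rlt_le, Rinv_0_lt_compat; lra]). lra. }
  pose proof (gronwall (fun t => v t * v t + v1 t * v1 t) (fun t => 2 * v t * v1 t + 2 * v1 t * v2 t) K 0 d K0 ltac:(lra)) as G.
  assert (G' : v t1 * v t1 + v1 t1 * v1 t1 <= (v 0 * v 0 + v1 0 * v1 0 + 0 * t1) * exp (K * t1)).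
  { apply G; [| |exact ht1].
    - intros t ht. destruct (Hv t ht) as [D1 [D2 _]]. apply der_sq2; assumption.
    - intros t ht. cbv beta. destruct (Hv t ht) as [_ [_ Hode]].
      destruct (Hw t ht) as [[hw1 hw2] [hv1 hv2]].
      assert (e2 : v2 t = s * v1 t / w t + (Vm t - lam) * v t).
      { assert (w t * v2 t - s * v1 t = w t * (Vm t - lam) * v t).
        { assert (E := Hode). field_simplify in E; [|lra]. 
          apply (Rmult_eq_reg_r (/ w t)); [|apply Rinv_neq_0_compat; lra].
          replace ((w t * v2 t - s * v1 t) * / w t) with ((w t * v2 t - s * v1 t) / w t) by reflexivity.
          replace (w t * (Vm t - lam) * v t * / w t) with ((Vm t - lam) * v t) by (field; lra).
          lra. }
        apply (Rmult_eq_reg_l (w t)); [|lra]. rewrite Rmult_plus_distr_l.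
        replace (w t * (s * v1 t / w t)) with (s * v1 t) by (field; lra). lra. }
      rewrite e2.
      replace (2 * v t * v1 t + 2 * v1 t * (s * v1 t / w t + (Vm t - lam) * v t))
        with (2 * v t * v1 t * (1 + (Vm t - lam)) + 2 * s / w t * (v1 t * v1 t)) by (field; lra).
      pose proof (two_ab_le (v t) (v1 t) (1 + (Vm t - lam))) as T.
      assert (B : Rabs (1 + (Vm t - lam)) <= 1 + Vmax + Rabs lam).
      { eapply Rle_trans; [apply Rabs_triang|]. rewrite Rabs_R1.
        eapply Rle_trans; [apply Rplus_le_compat_l; apply Rabs_triang|]. rewrite Rabs_Ropp, (Rabs_right (Vm t)) by lra. lra. }
      assert (HF1 : 0 <= v t * v t) by (pose proof (Rle_0_sqr (v t)); unfold Rsqr in *; lra).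
      assert (HF2 : 0 <= v1 t * v1 t) by (pose proof (Rle_0_sqr (v1 t)); unfold Rsqr in *; lra).
      assert (HX : 2 * v t * v1 t * (1 + (Vm t - lam)) <= (1 + Vmax + Rabs lam) * (v t * v t + v1 t * v1 t)).
      { eapply Rle_trans; [apply Rle_abs|]. eapply Rle_trans; [exact T|]. apply Rmult_le_compat_r; lra. }
      assert (HY : 2 * s / w t * (v1 t * v1 t) <= 2 * s / w0 * (v t * v t + v1 t * v1 t)).
      { apply Rmult_le_compat; try lra.
        - apply Rmult_le_pos; [lra|apply Rlt_le, Rinv_0_lt_compat; lra].
        - unfold Rdiv. apply Rmult_le_compat_l; [lra|]. apply Rinv_le_contravar; lra. }
      unfold K. lra. }
  rewrite hv10, hv0 in G'. replace ((0 * 0 + - 0 * - 0 + 0 * t1) * exp (K * t1)) with 0 in G' by ring.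
  assert (0 <= v1 t1 * v1 t1) by (pose proof (Rle_0_sqr (v1 t1)); unfold Rsqr in *; lra).
  assert (v t1 * v t1 = 0) by (pose proof (Rle_0_sqr (v t1)); unfold Rsqr in *; lra).
  apply Rmult_integral in H0. destruct H0; contradiction.
Qed.

Lemma setup rho h : 0 < h < 1 -> 1/4 < rho < 1/2 ->
  0 < delta rho h /\ 0 < wgt h (delta rho h) /\ 0 < sqrt h.
Proof.
  intros hh hr.
  assert (hd : 0 < delta rho h) by (unfold delta, Rpower; apply exp_pos).
  assert (hs : 0 < sqrt h) by (apply sqrt_lt_R0; lra).
  split; [exact hd|split; [|exact hs]].
  unfold wgt, delta. rewrite <- (Rpower_sqrt h) by lra. rewrite <- Rpower_plus.
  replace (/ 2 + (rho - 1 / 2)) with rho by field.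
  unfold Rpower. assert (ln h < 0) by (rewrite <- ln_1; apply ln_increasing; lra).
  assert (exp (rho * ln h) < 1) by (rewrite <- exp_0; apply exp_increasing; nra).
  lra.
Qed.

Definition Vmx b h w0 (l : Z) := h / (w0 * w0) * ((Rabs (IZR l) + b / 2) * (Rabs (IZR l) + b / 2)).

Lemma pot_good b rho h l : 0 < b -> 0 < h < 1 -> 1/4 < rho < 1/2 ->
  good (delta rho h) (wgt h (delta rho h)) (wgt h) (pot b h l) (Vmx b h (wgt h (delta rho h)) l).
Proof.
  intros hb hh hr. destruct (setup rho h hh hr) as [hd [hw0 hs]].
  set (d := delta rho h) in *. set (w0 := wgt h d) in *.
  assert (hwt : forall t, 0 <= t <= d -> w0 <= wgt h t <= 1).
  { intros t ht. unfold w0, wgt. split; nra. }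
  assert (hA : 0 <= (Rabs (IZR l) + b / 2) * (Rabs (IZR l) + b / 2)) by (pose proof (Rabs_pos (IZR l)); nra).
  split; [exact hd|split; [exact hw0|split]].
  - unfold Vmx. apply Rmult_le_pos; [|exact hA]. unfold Rdiv. apply Rmult_le_pos; [lra|].
    apply Rlt_le, Rinv_0_lt_compat. nra.
  - intros t ht. split; [apply hwt, ht|]. destruct (hwt t ht) as [h1 h2].
    unfold pot, Vmx. remember (wgt h t) as wt eqn:Hwt.
    assert (hw2 : 0 < wt ^ 2) by (apply pow_lt; lra).
    assert (hsq : 0 <= (IZR l - b / 2 * wt ^ 2) ^ 2) by (apply pow2_ge_0).
    split.
    + apply Rmult_le_pos; [|exact hsq]. unfold Rdiv. apply Rmult_le_pos; [lra|apply Rlt_le, Rinv_0_lt_compat; lra].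
    + apply Rmult_le_compat.
      * unfold Rdiv. apply Rmult_le_pos; [lra|apply Rlt_le, Rinv_0_lt_compat; lra].
      * exact hsq.
      * unfold Rdiv. apply Rmult_le_compat_l; [lra|]. apply Rinv_le_contravar; [nra|]. simpl. nra.
      * assert (Rabs (IZR l - b / 2 * wt ^ 2) <= Rabs (IZR l) + b / 2).
        { eapply Rle_trans; [apply Rabs_triang|]. rewrite Rabs_Ropp.
          rewrite (Rabs_right (b / 2 * wt ^ 2)) by (apply Rle_ge; apply Rmult_le_pos; lra).
          assert (wt ^ 2 <= 1) by (simpl; nra). nra. }
        pose proof (Rabs_pos (IZR l - b / 2 * wt ^ 2)).
        replace ((IZR l - b / 2 * wt ^ 2) ^ 2) with (Rabs (IZR l - b / 2 * wt ^ 2) * Rabs (IZR l - b / 2 * wt ^ 2)).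
        apply Rmult_le_compat; lra.
        rewrite <- Rabs_mult. rewrite Rabs_right. ring. apply Rle_ge. replace ((IZR l - b / 2 * wt ^ 2) * (IZR l - b / 2 * wt ^ 2)) with ((IZR l - b / 2 * wt ^ 2) ^ 2) by ring. exact hsq.
Qed.

Definition cl (d t : R) := (Rabs t - Rabs (t - d) + d) / 2.

Lemma cl_id d t : 0 <= t <= d -> cl d t = t.
Proof. intros ht. unfold cl. rewrite (Rabs_right t) by lra. rewrite (Rabs_left1 (t - d)) by lra. field. Qed.

Lemma cl_range d t : 0 <= d -> 0 <= cl d t <= d.
Proof. intros hd. unfold cl. unfold Rabs. destruct (Rcase_abs t); destruct (Rcase_abs (t - d)); split; lra. Qed.

Lemma cl_cont d : continuity (cl d).
Proof.
  intros t. unfold cl.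
  apply (continuity_pt_div (fun t => Rabs t - Rabs (t - d) + d) (fun _ => 2)); [| apply continuity_pt_const; intros ? ?; reflexivity | lra].
  apply (continuity_pt_plus (fun t => Rabs t - Rabs (t - d)) (fun _ => d)); [|apply continuity_pt_const; intros ? ?; reflexivity].
  apply (continuity_pt_minus Rabs (fun t => Rabs (t - d))). apply Rcontinuity_abs.
  apply (continuity_pt_comp (fun t => t - d) Rabs).
  apply (continuity_pt_minus (fun t => t) (fun _ => d)). apply derivable_continuous_pt, derivable_pt_id.
  apply continuity_pt_const; intros ? ?; reflexivity. apply Rcontinuity_abs.
Qed.

Lemma comp_cl_cont d g : 0 <= d -> (forall u, 0 <= u <= d -> continuity_pt g u) -> continuity (fun t => g (cl d t)).
Proof.
  intros hd Hg t. apply (continuity_pt_comp (cl d) g). apply cl_cont. apply Hg, cl_range, hd.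
Qed.

Lemma pot_cont b h l E u : 0 < h -> wgt h u <> 0 ->
  continuity_pt (fun u => / wgt h u) u /\ continuity_pt (fun u => wgt h u * (pot b h l u - E)) u.
Proof.
  intros hh hw. split; apply continuity_pt_filterlim.
  - apply (ex_derive_continuous (K:=R_AbsRing) (V:=R_NormedModule) (fun u => / wgt h u) u).
    unfold wgt in *. auto_derive. auto.
  - apply (ex_derive_continuous (K:=R_AbsRing) (V:=R_NormedModule) (fun u => wgt h u * (pot b h l u - E)) u).
    unfold pot, wgt in *. auto_derive. auto.
Qed.

Lemma pot_exist b rho h l E : 0 < b -> 0 < h < 1 -> 1/4 < rho < 1/2 ->
  exists y p, sol (delta rho h) (wgt h) (pot b h l) E y p.
Proof.
  intros hb hh hr.
  pose proof (pot_good b rho h l hb hh hr) as hg.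
  remember (delta rho h) as d eqn:Hd. remember (wgt h d) as w0 eqn:Hw0.
  remember (Vmx b h w0 l) as Vm eqn:HVm.
  assert (hg' := hg). destruct hg' as [hd [hw0 [hV Hw]]].
  set (a := fun t => / wgt h (cl d t)).
  set (c := fun t => wgt h (cl d t) * (pot b h l (cl d t) - E)).
  assert (hwpos : forall u, 0 <= u <= d -> wgt h u <> 0) by (intros u hu; destruct (Hw u hu) as [[h1 _] _]; lra).
  assert (ca : continuity a).
  { apply (comp_cl_cont d (fun u => / wgt h u)); [lra|]. intros u hu. apply (pot_cont b h l E u); [lra|apply hwpos, hu]. }
  assert (cc : continuity c).
  { apply (comp_cl_cont d (fun u => wgt h u * (pot b h l u - E))); [lra|]. intros u hu. apply (pot_cont b h l E u); [lra|apply hwpos, hu]. }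
  set (M := / w0 + Vm + Rabs E).
  assert (hM : 0 <= M) by (unfold M; pose proof (Rinv_0_lt_compat w0 hw0); pose proof (Rabs_pos E); lra).
  assert (ba : forall t, Rabs (a t) <= M).
  { intros t. unfold a. pose proof (cl_range d t ltac:(lra)) as hc. destruct (Hw _ hc) as [[h1 h2] _].
    rewrite Rabs_right by (apply Rle_ge, Rlt_le, Rinv_0_lt_compat; lra).
    assert (/ wgt h (cl d t) <= / w0) by (apply Rinv_le_contravar; lra).
    unfold M. pose proof (Rabs_pos E). lra. }
  assert (bc : forall t, Rabs (c t) <= M).
  { intros t. unfold c. pose proof (cl_range d t ltac:(lra)) as hc. destruct (Hw _ hc) as [[h1 h2] [h3 h4]].
    rewrite Rabs_mult. rewrite (Rabs_right (wgt h (cl d t))) by lra.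
    assert (Rabs (pot b h l (cl d t) - E) <= Vm + Rabs E).
    { eapply Rle_trans; [apply Rabs_triang|]. rewrite Rabs_Ropp, (Rabs_right (pot b h l (cl d t))) by lra. lra. }
    pose proof (Rabs_pos (pot b h l (cl d t) - E)).
    assert (wgt h (cl d t) * Rabs (pot b h l (cl d t) - E) <= 1 * (Vm + Rabs E)) by (apply Rmult_le_compat; lra).
    unfold M. pose proof (Rinv_0_lt_compat w0 hw0). lra. }
  destruct (ode_exist a c M 1 (-1) ca cc hM ba bc) as [y [p [h0 [hp0 D]]]].
  exists y, p. split; [exact h0|split; [exact hp0|]].
  intros t ht. destruct (D t) as [D1 D2]. unfold a, c in D1, D2. rewrite (cl_id d t ht) in D1, D2.
  split.
  - eapply dpl_eq; [exact D1|]. unfold Rdiv. ring.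
  - eapply dpl_eq; [exact D2|]. ring.
Qed.

Lemma sqrt2_gt : 1.4 < sqrt 2.
Proof.
  pose proof (sqrt_sqrt 2 ltac:(lra)). pose proof (sqrt_pos 2). nra.
Qed.

Lemma pot_cmp b rho h m : 0 < b -> 0 < h < 1 -> 1/4 < rho < 1/2 ->
  Rabs (IZR m) > (1 + sqrt 2) * b / 2 ->
  exists l : Z, forall t, 0 <= t <= delta rho h -> pot b h l t < pot b h m t.
Proof.
  intros hb hh hr hm.
  destruct (setup rho h hh hr) as [hd [hw0 hs]].
  pose proof sqrt2_gt as hs2.
  assert (hwt : forall t, 0 <= t <= delta rho h -> 0 < wgt h t <= 1).
  { intros t ht. unfold wgt in *. split; nra. }
  assert (key : forall l : Z, forall t, 0 <= t <= delta rho h ->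
      (IZR l - b / 2 * wgt h t ^ 2) ^ 2 < (IZR m - b / 2 * wgt h t ^ 2) ^ 2 -> pot b h l t < pot b h m t).
  { intros l t ht H. unfold pot. destruct (hwt t ht) as [h1 h2].
    apply Rmult_lt_compat_l; [|exact H]. unfold Rdiv. apply Rmult_lt_0_compat; [lra|]. apply Rinv_0_lt_compat, pow_lt; lra. }
  destruct (Rtotal_order (IZR m) 0) as [hneg|[hz|hpos]].
  - exists (m + 1)%Z. intros t ht. apply key; [exact ht|]. rewrite plus_IZR.
    assert (hm1 : IZR m <= -1).
    { assert (m < 0)%Z by (apply lt_IZR; exact hneg). assert (m <= -1)%Z by lia. apply IZR_le in H0. exact H0. }
    destruct (hwt t ht) as [h1 h2].
    assert (0 <= b / 2 * wgt h t ^ 2) by (apply Rmult_le_pos; [lra|apply pow_le; lra]).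
    nra.
  - rewrite hz, Rabs_R0 in hm. pose proof (sqrt_pos 2). nra.
  - exists (m - 1)%Z. intros t ht. apply key; [exact ht|]. rewrite minus_IZR.
    assert (hm1 : 1 <= IZR m).
    { assert (0 < m)%Z by (apply lt_IZR; exact hpos). assert (1 <= m)%Z by lia. apply IZR_le in H0. exact H0. }
    rewrite Rabs_right in hm by lra.
    destruct (hwt t ht) as [h1 h2].
    assert (hc : b / 2 * wgt h t ^ 2 <= b / 2).
    { assert (wgt h t ^ 2 <= 1) by (simpl; nra). nra. }
    assert (hb2 : b < 2 * IZR m - 1).
    { destruct (Rlt_or_le b (2 * IZR m - 1)) as [|hge]; [assumption|exfalso].
      assert ((2 * IZR m - 1) * (1 + sqrt 2) <= b * (1 + sqrt 2)) by (apply Rmult_le_compat_r; lra).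
      nra. }
    assert (0 <= b / 2 * wgt h t ^ 2) by (apply Rmult_le_pos; [lra|apply pow_le; lra]).
    nra.
Qed.

Lemma wgt_der h t : derivable_pt_lim (wgt h) t (- sqrt h).
Proof. apply is_derive_Reals. unfold wgt. auto_derive; auto. ring. Qed.

Lemma sol_eigen b rho h l E y p : 0 < h < 1 -> 1/4 < rho < 1/2 ->
  sol (delta rho h) (wgt h) (pot b h l) E y p -> y (delta rho h) = 0 ->
  is_eigenvalue b rho h l E.
Proof.
  intros hh hr [h0 [hp0 D]] hyd.
  destruct (setup rho h hh hr) as [hd [hw0 hs]].
  assert (hwt : forall t, 0 <= t <= delta rho h -> 0 < wgt h t).
  { intros t ht. unfold wgt in *. nra. }
  exists y, (fun t => p t / wgt h t),
    (fun t => ((wgt h t * (pot b h l t - E) * y t) * wgt h t - (- sqrt h) * p t) / Rsqr (wgt h t)).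
  split; [|split; [|split]].
  - intros t ht. destruct (D t ht) as [D1 D2]. pose proof (hwt t ht) as hw.
    split; [exact D1|split].
    + apply (derivable_pt_lim_div p (wgt h)); [exact D2|apply wgt_der|lra].
    + unfold Rsqr. field. lra.
  - cbv beta. rewrite hp0, h0. unfold wgt. rewrite Rmult_0_r. field.
  - exact hyd.
  - exists 0. split; [lra|]. rewrite h0. lra.
Qed.

Lemma neg_eig (w : R -> R) s Vm lam d v v1 v2 :
  (forall t, 0 <= t <= d -> derivable_pt_lim v t (v1 t) /\ derivable_pt_lim v1 t (v2 t) /\
     - (w t * v2 t - s * v1 t) / w t + Vm t * v t = lam * v t) ->
  (forall t, 0 <= t <= d -> derivable_pt_lim (fun t => - v t) t (- v1 t) /\
     derivable_pt_lim (fun t => - v1 t) t (- v2 t) /\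
     - (w t * (- v2 t) - s * (- v1 t)) / w t + Vm t * (- v t) = lam * (- v t)).
Proof.
  intros H t ht. destruct (H t ht) as [D1 [D2 E]]. split; [|split].
  - apply (derivable_pt_lim_opp v). exact D1.
  - apply (derivable_pt_lim_opp v1). exact D2.
  - unfold Rdiv in *. rewrite <- (Ropp_involutive (lam * - v t)).
    replace (- (lam * - v t)) with (lam * v t) by ring. rewrite <- E. ring.
Qed.

Theorem proposition2p6 (b rho h : R) (m : Z) (Lam : Z -> R) (g : R)
  (hb : 0 < b) (hrho : 1/4 < rho < 1/2) (hh : 0 < h < 1)
  (hLam : forall l : Z, is_lambda1 b rho h l (Lam l))
  (hg : is_glb (fun x => exists l : Z, x = Lam l) g)
  (hm : Rabs (IZR m) > (1 + sqrt 2) * b / 2) :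
  Lam m > g.
Proof.
  destruct (setup rho h hh hrho) as [hd [hw0 hs]].
  destruct (pot_cmp b rho h m hb hh hrho hm) as [l Hcmp].
  destruct (hLam m) as [[v [v1 [v2 [Hv [hv10 [hvd hnz]]]]]] _].
  pose proof (pot_good b rho h m hb hh hrho) as hgm.
  pose proof (pot_good b rho h l hb hh hrho) as hgl.
  assert (hv0 : v 0 <> 0).
  { apply (v0_nonzero _ _ _ _ _ (sqrt h) (Lam m) v v1 v2 hgm); [lra|exact Hv|exact hv10|exact hnz]. }
  assert (hw1 : wgt h 0 = 1) by (unfold wgt; ring).
  assert (Hneg : forall y p, sol (delta rho h) (wgt h) (pot b h l) (Lam m) y p ->
                   exists c, 0 < c < delta rho h /\ y c <= 0).
  { assert (gen : forall u u1 u2 : R -> R,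
       (forall t, 0 <= t <= delta rho h -> derivable_pt_lim u t (u1 t) /\ derivable_pt_lim u1 t (u2 t) /\
          - (wgt h t * u2 t - sqrt h * u1 t) / wgt h t + pot b h m t * u t = Lam m * u t) ->
       u1 0 = - u 0 -> u (delta rho h) = 0 -> 0 < u 0 ->
       forall y p, sol (delta rho h) (wgt h) (pot b h l) (Lam m) y p ->
                   exists c, 0 < c < delta rho h /\ y c <= 0).
    { intros u u1 u2 Hu hu10 hud hu0 y p hs'.
      destruct (first_zero u 0 (delta rho h) hd) as [a [ha [hua hpos]]].
      { intros t ht. destruct (Hu t ht) as [D1 _]. exact (dcont u t (u1 t) D1). }
      { exact hu0. }
      { rewrite hud. lra. }
      destruct (sturm _ _ (wgt h) (pot b h l) (pot b h m) _ (sqrt h) (Lam m) y p u u1 u2 a hgl hw1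
                 (fun t _ => wgt_der h t) hs' Hu hu10 ha hua hpos Hcmp) as [c [hc hyc]].
      exists c. split; [lra|exact hyc]. }
    destruct (Rlt_or_le 0 (v 0)) as [hp|hn].
    - apply (gen v v1 v2); assumption.
    - apply (gen (fun t => - v t) (fun t => - v1 t) (fun t => - v2 t)).
      + apply neg_eig. exact Hv.
      + cbv beta. rewrite hv10. ring.
      + cbv beta. rewrite hvd. ring.
      + cbv beta. destruct hn as [hn|hn]; [lra|contradiction]. }
  destruct (shoot _ _ (wgt h) (pot b h l) _ (Lam m) hgl (fun E => pot_exist b rho h l E hb hh hrho) Hneg)
    as [Es [y [p [hlt [hs' hyd]]]]].
  pose proof (sol_eigen b rho h l Es y p hh hrho hs' hyd) as He.
  destruct (hLam l) as [_ Hmin]. specialize (Hmin Es He).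
  destruct hg as [Hlb _]. specialize (Hlb (Lam l) (ex_intro _ l eq_refl)).
  lra.
Qed.
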